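(* Let $F$ be an infinite field and $n\ge2$. Let $z_1,\dots,z_k$ be distinct variables of nonzero degrees $g_1,\dots,g_k\in\{1,\dots,n-1\}$ with $g_1+\dots+g_k\le n-1$, and let $y_1,\dots,y_k,y$ be variables of degree $0$. Let $f=[z_1,y_1,z_2,y_2,\dots,z_k,y_k]$. Then for every $1\le i\le k$, $$[z_1,y_1,\dots,z_{i-1},y_{i-1},z_i,y,y_i,z_{i+1},y_{i+1},\dots,z_k,y_k]\in\langle\{f\}\cup I\rangle_{T_{\mathbb{Z}_n}}.$$
   Context: $UT_n(F)^{(-)}$: $n\times n$ upper triangular matrices with bracket $[a,b]=ab-ba$ and canonical $\mathbb{Z}_n$-grading (degree-$k$ component spanned by $e_{ij}$ with $j-i=k$); elements of $\mathbb{Z}_n\setminus\{0\}$ are identified with $1,\dots,n-1$. $I$ is its $T_{\mathbb{Z}_n}$-ideal of graded identities in the free $\mathbb{Z}_n$-graded Lie algebra $\mathcal{L}_{\mathbb{Z}_n}$ (countably many variables of each degree). Commutators are left normed; $\langle S\rangle_{T_{\mathbb{Z}_n}}$ is the smallest graded ideal containing $S$ invariant under degree-preserving endomorphisms. *)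

(* Defs.v *)
From HB Require Import structures.
From mathcomp Require Import all_boot all_order all_algebra.
Set Implicit Arguments. Unset Strict Implicit. Unset Printing Implicit Defensive.
Import GRing.Theory.
Local Open Scope ring_scope.

(* The free Lie algebra L_{Z_n} is the quotient of these terms by the      *)
(* congruence [lequiv] generated by the Lie algebra axioms below.          *)
Inductive lterm (n : nat) (F : Type) : Type :=
| LVar of 'Z_n & nat
| LZero
| LAdd of lterm n F & lterm n F
| LScale of F & lterm n F
| LBr of lterm n F & lterm n F.

Arguments LZero {n F}.

Section Free.
Variables (n : nat) (F : fieldType).
Local Notation term := (lterm n F).

Inductive lequiv : term -> term -> Prop :=
| le_refl t : lequiv t t
| le_sym t u : lequiv t u -> lequiv u t
| le_trans t u v : lequiv t u -> lequiv u v -> lequiv t v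
| le_addC t u : lequiv t u -> forall t' u', lequiv t' u' -> lequiv (LAdd t t') (LAdd u u')
| le_scaleC c t u : lequiv t u -> lequiv (LScale c t) (LScale c u)
| le_brC t u : lequiv t u -> forall t' u', lequiv t' u' -> lequiv (LBr t t') (LBr u u')
| le_addA t u v : lequiv (LAdd t (LAdd u v)) (LAdd (LAdd t u) v)
| le_addCom t u : lequiv (LAdd t u) (LAdd u t)
| le_add0 t : lequiv (LAdd LZero t) t
| le_addN t : lequiv (LAdd t (LScale (-1) t)) LZero
| le_scaleDr c t u : lequiv (LScale c (LAdd t u)) (LAdd (LScale c t) (LScale c u))
| le_scaleDl c d t : lequiv (LScale (c + d) t) (LAdd (LScale c t) (LScale d t))
| le_scaleA c d t : lequiv (LScale c (LScale d t)) (LScale (c * d) t)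
| le_scale1 t : lequiv (LScale 1 t) t
| le_brDl t u v : lequiv (LBr (LAdd t u) v) (LAdd (LBr t v) (LBr u v))
| le_brDr t u v : lequiv (LBr t (LAdd u v)) (LAdd (LBr t u) (LBr t v))
| le_brZl c t u : lequiv (LBr (LScale c t) u) (LScale c (LBr t u))
| le_brZr c t u : lequiv (LBr t (LScale c u)) (LScale c (LBr t u))
| le_brxx t : lequiv (LBr t t) LZero
| le_jacobi t u v :
    lequiv (LAdd (LBr (LBr t u) v) (LAdd (LBr (LBr u v) t) (LBr (LBr v t) u))) LZero.

Inductive lhom : 'Z_n -> term -> Prop :=
| hom_var d i : lhom d (LVar F d i)
| hom_zero d : lhom d LZero
| hom_add d t u : lhom d t -> lhom d u -> lhom d (LAdd t u)
| hom_scale d c t : lhom d t -> lhom d (LScale c t)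
| hom_br d e t u : lhom d t -> lhom e u -> lhom (d + e) (LBr t u).

(* Substitution of variables; it is degree preserving (= a graded         *)
(* endomorphism of L_{Z_n}) when every Var d i is sent to a term of         *)
(* degree d.                                                               *)
Fixpoint lsubst (s : 'Z_n -> nat -> term) (t : term) : term :=
  match t with
  | LVar d i => s d i
  | LZero => LZero
  | LAdd t u => LAdd (lsubst s t) (lsubst s u)
  | LScale c t => LScale c (lsubst s t)
  | LBr t u => LBr (lsubst s t) (lsubst s u)
  end.

Definition graded_subst (s : 'Z_n -> nat -> term) : Prop :=
  forall d i, lhom d (s d i).

(* <S>_{T_{Z_n}} : the ideal generated by all graded-endomorphic images   *)
(* of elements of S, closed under equality in L_{Z_n}.                    *)
Inductive in_TIdeal (S : term -> Prop) : term -> Prop :=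
| TI_gen s sg : S s -> graded_subst sg -> in_TIdeal S (lsubst sg s)
| TI_zero : in_TIdeal S LZero
| TI_add t u : in_TIdeal S t -> in_TIdeal S u -> in_TIdeal S (LAdd t u)
| TI_scale c t : in_TIdeal S t -> in_TIdeal S (LScale c t)
| TI_brl t u : in_TIdeal S t -> in_TIdeal S (LBr t u)
| TI_brr t u : in_TIdeal S u -> in_TIdeal S (LBr t u)
| TI_equiv t u : in_TIdeal S t -> lequiv t u -> in_TIdeal S u.

Definition UT_hom (d : 'Z_n) (A : 'M[F]_n) : Prop :=
  forall i j : 'I_n, A i j != 0 -> (i <= j)%N /\ (j - i)%N = (d : nat).

Fixpoint leval (rho : 'Z_n -> nat -> 'M[F]_n) (t : term) : 'M[F]_n :=
  match t with
  | LVar d i => rho d i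
  | LZero => 0
  | LAdd t u => leval rho t + leval rho u
  | LScale c t => c *: leval rho t
  | LBr t u => leval rho t *m leval rho u - leval rho u *m leval rho t
  end.

Definition graded_eval (rho : 'Z_n -> nat -> 'M[F]_n) : Prop :=
  forall d i, UT_hom d (rho d i).

(* I : the graded identities of UT_n(F)^(-). *)
Definition UT_identity (t : term) : Prop :=
  forall rho, graded_eval rho -> leval rho t = 0.

Definition lcomm (s : seq term) : term :=
  match s with
  | [::] => LZero
  | x :: s' => foldl (@LBr n F) x s'
  end.

End Free.

Definition infinite_field (F : fieldType) : Prop :=
  forall s : seq F, exists x : F, x \notin s.

(* Main.v *)
Require Import Defs.
From mathcomp Require Import all_boot all_order all_algebra.
From Stdlib Require Import Setoid Morphisms.
Import GRing.Theory.
Local Open Scope ring_scope.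

Section Aux.
Variables (n : nat) (F : fieldType).
Local Notation term := (lterm n F).

#[local] Instance lequiv_Equiv : Equivalence (@lequiv n F).
Proof. split; [exact: le_refl| exact: le_sym | exact: le_trans]. Qed.
#[local] Instance LAdd_Proper : Proper (@lequiv n F ==> @lequiv n F ==> @lequiv n F) (@LAdd n F).
Proof. by move=> ? ? ? ? ? ?; apply: le_addC. Qed.
#[local] Instance LScale_Proper c : Proper (@lequiv n F ==> @lequiv n F) (@LScale n F c).
Proof. by move=> ? ? ?; apply: le_scaleC. Qed.
#[local] Instance LBr_Proper : Proper (@lequiv n F ==> @lequiv n F ==> @lequiv n F) (@LBr n F).
Proof. by move=> ? ? ? ? ? ?; apply: le_brC. Qed.

Lemma addr0L (t : term) : lequiv (LAdd t LZero) t.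
Proof. exact: le_trans (le_addCom _ _) (le_add0 _). Qed.

Lemma addNlL (t : term) : lequiv (LAdd (LScale (-1) t) t) LZero.
Proof. exact: le_trans (le_addCom _ _) (le_addN _). Qed.

Lemma cancelL (X Y : term) : lequiv (LAdd X Y) LZero -> lequiv Y (LScale (-1) X).
Proof.
move=> H.
transitivity (LAdd LZero Y); first by symmetry; apply: le_add0.
transitivity (LAdd (LAdd (LScale (-1) X) X) Y).
  apply: le_addC; [symmetry; apply: addNlL | reflexivity].
transitivity (LAdd (LScale (-1) X) (LAdd X Y)); first by symmetry; apply: le_addA.
setoid_rewrite H. apply: addr0L.
Qed.

Lemma antiL (u v : term) : lequiv (LBr u v) (LScale (-1) (LBr v u)).
Proof.
apply: cancelL.
transitivity (LAdd (LBr u v) (LBr v u)); first by apply: le_addCom.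
transitivity (LBr (LAdd u v) (LAdd u v)); last by apply: le_brxx.
symmetry.
transitivity (LAdd (LBr u (LAdd u v)) (LBr v (LAdd u v))); first by apply: le_brDl.
transitivity (LAdd (LAdd (LBr u u) (LBr u v)) (LAdd (LBr v u) (LBr v v))).
  by apply: le_addC; apply: le_brDr.
apply: le_addC.
  transitivity (LAdd LZero (LBr u v)); last by apply: le_add0.
  by apply: le_addC; [apply: le_brxx | reflexivity].
transitivity (LAdd (LBr v u) LZero); last by apply: addr0L.
by apply: le_addC; [reflexivity | apply: le_brxx].
Qed.

Lemma negnegL (t : term) : lequiv (LScale (-1) (LScale (-1) t)) t.
Proof.
transitivity (LScale ((-1) * (-1)) t); first by apply: le_scaleA.
rewrite mulrNN mulr1; apply: le_scale1.
Qed.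

Lemma DL (a b c : term) :
  lequiv (LBr (LBr a b) c) (LAdd (LBr a (LBr b c)) (LBr (LBr a c) b)).
Proof.
symmetry.
transitivity (LAdd (LScale (-1) (LBr (LBr b c) a)) (LScale (-1) (LBr (LBr c a) b))).
  apply: le_addC; first by apply: antiL.
  transitivity (LBr (LScale (-1) (LBr c a)) b); first by apply: le_brC; [apply: antiL|reflexivity].
  by apply: le_brZl.
transitivity (LScale (-1) (LAdd (LBr (LBr b c) a) (LBr (LBr c a) b))).
  by symmetry; apply: le_scaleDr.
transitivity (LScale (-1) (LScale (-1) (LBr (LBr a b) c))); last by apply: negnegL.
apply: le_scaleC; apply: cancelL; apply: le_jacobi.
Qed.

Lemma foldl_equiv (l : seq term) : forall t u, lequiv t u ->
  lequiv (foldl (@LBr n F) t l) (foldl (@LBr n F) u l).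
Proof.
elim: l => [|x l IH] t u H //=.
by apply: IH; apply: le_brC; [|reflexivity].
Qed.

Lemma foldl_add (l : seq term) : forall t u,
  lequiv (foldl (@LBr n F) (LAdd t u) l)
         (LAdd (foldl (@LBr n F) t l) (foldl (@LBr n F) u l)).
Proof.
elim: l => [|x l IH] t u /=; first by reflexivity.
transitivity (foldl (@LBr n F) (LAdd (LBr t x) (LBr u x)) l); last by apply: IH.
apply: foldl_equiv; apply: le_brDl.
Qed.

Lemma lcomm_catr (s : seq term) x t :
  lcomm (s ++ x :: t) = foldl (@LBr n F) (lcomm (rcons s x)) t.
Proof. by case: s => [|a s] //=; rewrite foldl_cat -cats1 foldl_cat. Qed.

Lemma lsubst_foldl sg (l : seq term) : forall t,
  lsubst sg (foldl (@LBr n F) t l) = foldl (@LBr n F) (lsubst sg t) (map (lsubst sg) l).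
Proof. by elim: l => [|x l IH] t //=; rewrite IH. Qed.

Lemma lsubst_lcomm sg (l : seq term) : lsubst sg (lcomm l) = lcomm (map (lsubst sg) l).
Proof. by case: l => [|x l] //=; rewrite lsubst_foldl. Qed.

Lemma hom_br0 d (t u : term) : lhom d t -> lhom 0 u -> lhom d (LBr t u).
Proof. by move=> ht hu; have := hom_br ht hu; rewrite addr0. Qed.

Section Abs.
Variables (S : term -> Prop) (I : eqType) (Z Y : I -> term) (y : term).
Definition flat (s : seq I) := flatten [seq [:: Z j; Y j] | j <- s].

Lemma main_abs (s : seq I) :
 (forall s1 j s2, s = s1 ++ j :: s2 ->
    in_TIdeal S (lcomm (flat s1 ++ [:: LBr (Z j) y; Y j] ++ flat s2))) ->
 (forall s1 j s2, s = s1 ++ j :: s2 ->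
    in_TIdeal S (lcomm (flat s1 ++ [:: Z j; LBr (Y j) y] ++ flat s2))) ->
 forall s1 j s2, s = s1 ++ j :: s2 ->
    in_TIdeal S (lcomm (flat s1 ++ [:: Z j; y; Y j] ++ flat s2)).
Proof.
move=> H1 H2 s1; elim/last_ind: s1 => [|s0 j0 IH] j s2 Hs.
  exact: (H1 [::] j s2 Hs).
have Hs0 : s = s0 ++ j0 :: (j :: s2) by rewrite Hs cat_rcons.
have A := H1 _ _ _ Hs.
have B := H2 _ _ _ Hs0.
have C := IH _ _ Hs0.
have Ef : flat (rcons s0 j0) = flat s0 ++ [:: Z j0; Y j0].
  by rewrite /flat map_rcons -cats1 flatten_cat /=.
move: A B C; rewrite Ef /= -!catA /= !lcomm_catr /=.
set v := lcomm _.
move=> A B C.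
eapply TI_equiv; last first.
  apply: foldl_equiv.
  symmetry.
  transitivity (LBr (LAdd (LBr (LBr v (Y j0)) (LBr (Z j) y))
     (LAdd (LBr (LBr v (LBr (Y j0) y)) (Z j)) (LBr (LBr (LBr v y) (Y j0)) (Z j)))) (Y j)).
    apply: le_brC; last by reflexivity.
    transitivity (LAdd (LBr (LBr v (Y j0)) (LBr (Z j) y)) (LBr (LBr (LBr v (Y j0)) y) (Z j))).
      by apply: DL.
    apply: le_addC; first by reflexivity.
    transitivity (LBr (LAdd (LBr v (LBr (Y j0) y)) (LBr (LBr v y) (Y j0))) (Z j)).
      by apply: le_brC; [apply: DL | reflexivity].
    by apply: le_brDl.
  transitivity (LAdd (LBr (LBr (LBr v (Y j0)) (LBr (Z j) y)) (Y j))
     (LBr (LAdd (LBr (LBr v (LBr (Y j0) y)) (Z j)) (LBr (LBr (LBr v y) (Y j0)) (Z j))) (Y j))).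
    by apply: le_brDl.
  apply: le_addC; first by reflexivity.
  by apply: le_brDl.
eapply TI_equiv; last by symmetry; apply: foldl_add.
apply: TI_add; first exact: A.
eapply TI_equiv; last by symmetry; apply: foldl_add.
by apply: TI_add.
Qed.
End Abs.
End Aux.

Lemma uniq_mid (T : eqType) s1 (x : T) s2 :
  uniq (s1 ++ x :: s2) -> x \notin s1 /\ x \notin s2.
Proof.
rewrite cat_uniq /= => /and3P [_ H /andP [H2 _]]; split => //.
by apply: contra H => h; rewrite h.
Qed.

Theorem mainTheorem12 (F : fieldType) (n k : nat)
  (g : 'I_k -> 'Z_n) (a b : 'I_k -> nat) (c : nat) :
  infinite_field F ->
  (2 <= n)%N ->
  (forall j, g j != 0) ->
  (\sum_(j < k) (g j : nat) <= n - 1)%N ->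
  injective (fun j => (g j, a j)) ->
  injective b ->
  (forall j, b j != c) ->
  let z j := LVar F (g j) (a j) in
  let yy j := LVar F (0 : 'Z_n) (b j) in
  let y := LVar F (0 : 'Z_n) c in
  let f := lcomm (flatten [seq [:: z j; yy j] | j <- enum 'I_k]) in
  forall i : 'I_k,
    in_TIdeal (fun t => t = f \/ UT_identity t)
      (lcomm (flatten [seq (if j == i then [:: z j; y; yy j] else [:: z j; yy j])
                      | j <- enum 'I_k])).
Proof.
move=> _ _ gnz _ injga injb _ z yy y f i.
set S := fun t => t = f \/ UT_identity t.
have [s1 [s2 Hs]] : exists s1 s2, enum 'I_k = s1 ++ i :: s2.
  have : i \in enum 'I_k by rewrite mem_enum.
  by case/splitPr => p1 p2; exists p1, p2.
have [ni1 ni2] : i \notin s1 /\ i \notin s2 by apply: uniq_mid; rewrite -Hs enum_uniq.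
have Emap : forall t, i \notin t ->
   [seq (if j == i then [:: z j; y; yy j] else [:: z j; yy j]) | j <- t]
   = [seq [:: z j; yy j] | j <- t].
  move=> t nt; apply/eq_in_map => j jt; case: eqP => // eji.
  by rewrite -eji jt in nt.
rewrite Hs map_cat flatten_cat /= eqxx !Emap //.
have := @main_abs n F S _ z yy y (enum 'I_k) _ _ s1 i s2 Hs; apply.
- move=> t1 j t2 Ht.
  have [nj1 nj2] : j \notin t1 /\ j \notin t2 by apply: uniq_mid; rewrite -Ht enum_uniq.
  pose sg := fun d m => if (d == g j) && (m == a j) then LBr (z j) y else LVar F d m.
  have Hsg : graded_subst sg.
    move=> d m; rewrite /sg; case: andP => [[/eqP -> _]|_]; last by constructor.
    by apply: hom_br0; constructor.
  have Ez : forall j', j' != j -> lsubst sg (z j') = z j'.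
    move=> j' nj /=; rewrite /sg; case: andP => // [[/eqP e1 /eqP e2]].
    by move: nj; rewrite (injga j' j) ?eqxx //= e1 e2.
  have Ey : forall j', lsubst sg (yy j') = yy j'.
    by move=> j' /=; rewrite /sg eq_sym (negbTE (gnz j)).
  have Eo : forall t, j \notin t -> map (lsubst sg) (@flat n F _ z yy t) = @flat n F _ z yy t.
    move=> t nt; rewrite /flat map_flatten -map_comp; congr flatten.
    apply/eq_in_map => j' jt.
    change ([:: lsubst sg (z j'); lsubst sg (yy j')] = [:: z j'; yy j']).
    rewrite Ez ?Ey //.
    by apply: contraNneq nt => <-.
  have := TI_gen (S := S) (s := f) (or_introl erefl) Hsg.
  rewrite /f Ht lsubst_lcomm.
  have -> : flatten [seq [:: z j0; yy j0] | j0 <- t1 ++ j :: t2]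
     = @flat n F _ z yy t1 ++ [:: z j; yy j] ++ @flat n F _ z yy t2.
    by rewrite map_cat flatten_cat.
  have Ej : map (lsubst sg) [:: z j; yy j] = [:: LBr (z j) y; yy j].
    by rewrite !map_cons Ey /= /sg !eqxx.
  by rewrite !map_cat !Eo // Ej.
- move=> t1 j t2 Ht.
  have [nj1 nj2] : j \notin t1 /\ j \notin t2 by apply: uniq_mid; rewrite -Ht enum_uniq.
  pose sg := fun d m => if (d == 0) && (m == b j) then LBr (yy j) y else LVar F d m.
  have Hsg : graded_subst sg.
    move=> d m; rewrite /sg; case: andP => [[/eqP -> _]|_]; last by constructor.
    by apply: hom_br0; constructor.
  have Ey : forall j', j' != j -> lsubst sg (yy j') = yy j'.
    move=> j' nj /=; rewrite /sg; case: andP => // [[_ /eqP e2]].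
    by move: nj; rewrite (injb j' j) ?eqxx.
  have Ez : forall j', lsubst sg (z j') = z j'.
    by move=> j' /=; rewrite /sg (negbTE (gnz j')).
  have Eo : forall t, j \notin t -> map (lsubst sg) (@flat n F _ z yy t) = @flat n F _ z yy t.
    move=> t nt; rewrite /flat map_flatten -map_comp; congr flatten.
    apply/eq_in_map => j' jt.
    change ([:: lsubst sg (z j'); lsubst sg (yy j')] = [:: z j'; yy j']).
    rewrite Ez Ey //.
    by apply: contraNneq nt => <-.
  have := TI_gen (S := S) (s := f) (or_introl erefl) Hsg.
  rewrite /f Ht lsubst_lcomm.
  have -> : flatten [seq [:: z j0; yy j0] | j0 <- t1 ++ j :: t2]
     = @flat n F _ z yy t1 ++ [:: z j; yy j] ++ @flat n F _ z yy t2.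
    by rewrite map_cat flatten_cat.
  have Ej : map (lsubst sg) [:: z j; yy j] = [:: z j; LBr (yy j) y].
    by rewrite !map_cons Ez /= /sg !eqxx.
  by rewrite !map_cat !Eo // Ej.
Qed.
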